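(* Let $A=\prod_{i=1}^n A_i$ with each $A_i\in\{\mathsf P^1,\mathbb F_2\}$, with the product bicharacter, and let $\mathcal G,\mathcal M\subseteq A$ be subgroups with $\mathcal G\subseteq\mathcal M^\perp$. Set $\mathcal L=\mathcal G^\perp$ (so $\mathcal M\subseteq\mathcal L$). Let $R\subseteq[n]$ be a correctable region. Then every coset $[l]\in\mathcal L/\mathcal M$ has a representative $l\in\mathcal L$ with $\operatorname{supp}(l)\cap R=\emptyset$.
   Context: Bicharacter: on $\mathsf P^1=\{I,X,Y,Z\}$ (single-qubit Paulis modulo phase) $\langle a,b\rangle=+1$ if they commute, $-1$ otherwise; on $\mathbb F_2$, $\langle x,y\rangle=(-1)^{xy}$; on $A$ the coordinatewise product. $B^\perp=\{a\in A:\langle a,b\rangle=1\ \forall b\in B\}$. $\operatorname{supp}(a)=\{i:a_i\neq I\}$. A region $R\subseteq[n]$ is correctable if every $e\in\mathcal M^\perp$ with $\operatorname{supp}(e)\subseteq R$ belongs to $\mathcal G$. *)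

(* Defs.v *)
From mathcomp Require Import all_boot all_order all_algebra.
Set Implicit Arguments. Unset Strict Implicit. Unset Printing Implicit Defensive.
Import GRing.Theory.
Local Open Scope ring_scope.

(* Single-qubit Paulis modulo phase: P^1 = {I, X, Y, Z} (Klein four-group). *)
Inductive pauli := PI | PX | PY | PZ.

Definition pmul (a b : pauli) : pauli :=
  match a, b with
  | PI, c => c | c, PI => c
  | PX, PX => PI | PX, PY => PZ | PX, PZ => PY
  | PY, PX => PZ | PY, PY => PI | PY, PZ => PX
  | PZ, PX => PY | PZ, PY => PX | PZ, PZ => PI
  end.

Definition pcommute (a b : pauli) : bool :=
  match a, b with
  | PI, _ | _, PI => true
  | PX, PX | PY, PY | PZ, PZ => true
  | _, _ => false
  end.

(* Local factor: kind true = P^1, kind false = F_2. *)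
Definition loc (b : bool) : Type := if b then pauli else bool.

Definition locone (b : bool) : loc b :=
  match b as b0 return loc b0 with true => PI | false => false end.

Definition locmul (b : bool) : loc b -> loc b -> loc b :=
  match b as b0 return loc b0 -> loc b0 -> loc b0 with
  | true => pmul | false => addb end.

Definition locinv (b : bool) : loc b -> loc b :=
  match b as b0 return loc b0 -> loc b0 with
  | true => fun x => x | false => fun x => x end.

Definition locchar (b : bool) : loc b -> loc b -> int :=
  match b as b0 return loc b0 -> loc b0 -> int with
  | true => fun x y => if pcommute x y then 1 else -1
  | false => fun x y => if x && y then -1 else 1
  end.

Definition elt (n : nat) (k : 'I_n -> bool) : Type := forall i : 'I_n, loc (k i).

Definition aone n (k : 'I_n -> bool) : elt k := fun i => locone (k i).
Definition amul n (k : 'I_n -> bool) (a b : elt k) : elt k :=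
  fun i => locmul (a i) (b i).
Definition ainv n (k : 'I_n -> bool) (a : elt k) : elt k := fun i => locinv (a i).

Definition bichar n (k : 'I_n -> bool) (a b : elt k) : int :=
  \prod_(i < n) locchar (a i) (b i).

Definition is_subgroup n (k : 'I_n -> bool) (B : elt k -> Prop) : Prop :=
  [/\ B (aone k), (forall a b, B a -> B b -> B (amul a b))
    & (forall a, B a -> B (ainv a))].

Definition perp n (k : 'I_n -> bool) (B : elt k -> Prop) : elt k -> Prop :=
  fun a => forall b, B b -> bichar a b = 1.

Definition in_supp n (k : 'I_n -> bool) (a : elt k) (i : 'I_n) : Prop :=
  a i <> locone (k i).

Definition correctable n (k : 'I_n -> bool) (G M : elt k -> Prop)
    (R : {set 'I_n}) : Prop :=
  forall e, perp M e -> (forall i, in_supp e i -> i \in R) -> G e.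

(* Main.v *)
Require Import Defs.
From mathcomp Require Import all_boot all_order all_algebra boolp zify.
Set Implicit Arguments. Unset Strict Implicit. Unset Printing Implicit Defensive.
Import GRing.Theory.
Local Open Scope ring_scope.

Definition bb := (bool * bool)%type.
Definition xorp (p q : bb) : bb := (p.1 (+) q.1, p.2 (+) q.2).
Definition beta (b : bool) (p q : bb) : bool :=
  if b then (p.1 && q.2) (+) (p.2 && q.1) else (p.1 && q.1) (+) (p.2 && q.2).
Definition sg (b : bool) : int := if b then -1 else 1.

Lemma sgD b c : sg (b (+) c) = sg b * sg c.
Proof. by case: b; case: c. Qed.

Lemma beta_sym b p q : beta b p q = beta b q p.
Proof. by case: b; case: p => [[] []]; case: q => [[] []]. Qed.

Lemma beta_xor b p q r : beta b p (xorp q r) = beta b p q (+) beta b p r.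
Proof. by case: b; case: p => [[] []]; case: q => [[] []]; case: r => [[] []]. Qed.

Lemma beta0 b p : beta b p (false, false) = false.
Proof. by case: b; case: p => [[] []]. Qed.

Definition wit (b : bool) (q : bb) : bb :=
  if b then (if q.2 then (true, false) else (false, true))
  else (if q.1 then (true, false) else (false, true)).

Lemma witP b q : q != (false, false) -> beta b (wit b q) q.
Proof. by case: b; case: q => [[] []]. Qed.

Definition V n := {ffun 'I_n -> bb}.
Definition vmul n (u v : V n) : V n := [ffun i => xorp (u i) (v i)].
Definition vone n : V n := [ffun _ => (false, false)].
Definition B n (k : 'I_n -> bool) (u v : V n) : bool :=
  \big[addb/false]_(i < n) beta (k i) (u i) (v i).

Lemma B_sym (n : nat) (k : 'I_n -> bool) (u v : V n) : B k u v = B k v u.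
Proof. by apply: eq_bigr => i _; rewrite beta_sym. Qed.

Lemma B_mulr (n : nat) (k : 'I_n -> bool) (u v w : V n) : B k u (vmul v w) = B k u v (+) B k u w.
Proof. rewrite /B -big_split /=; apply: eq_bigr => i _; by rewrite ffunE beta_xor. Qed.

Lemma B_mull (n : nat) (k : 'I_n -> bool) (u v w : V n) : B k (vmul v w) u = B k v u (+) B k w u.
Proof. by rewrite B_sym B_mulr !(B_sym _ u). Qed.

Lemma B_one (n : nat) (k : 'I_n -> bool) (u : V n) : B k u (vone n) = false.
Proof. by apply: big1 => i _; rewrite ffunE beta0. Qed.

Lemma vmulK n (t : V n) : involutive (vmul t).
Proof. by move=> u; apply/ffunP => i; rewrite !ffunE /xorp /=; case: (t i) (u i) => [[] []] [[] []]. Qed.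

Lemma nondeg (n : nat) (k : 'I_n -> bool) (h : V n) : h != vone n -> exists a, B k a h.
Proof.
move=> nh.
have [i hi] : exists i, h i != (false, false).
  apply/existsP; apply: contraR nh => /existsPn H; apply/eqP/ffunP => i.
  by rewrite ffunE; apply/eqP; move: (H i); rewrite negbK.
exists [ffun j => if j == i then wit (k i) (h i) else (false, false)].
rewrite /B (bigD1 i) //= ffunE eqxx witP // big1 ?addbF // => j /negbTE ji.
by rewrite ffunE ji beta_sym beta0.
Qed.

Lemma sum_flip n (P : pred (V n)) (F : V n -> int) t :
  (forall a, P (vmul t a) = P a) -> (forall a, F (vmul t a) = - F a) ->
  \sum_(a | P a) F a = 0.
Proof.
move=> HP HF.
have E := reindex_inj (op := +%R) (x := 0) (P := P) (F := F) (can_inj (vmulK t)).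
have : \sum_(a | P a) F a = - \sum_(a | P a) F a.
  by rewrite {1}E -sumrN; apply: eq_big => a; rewrite ?HP ?HF.
lia.
Qed.

Definition perpS n k (H : {set V n}) : {set V n} :=
  [set a | [forall h in H, ~~ B k a h]].

Definition subg n (H : {set V n}) :=
  vone n \in H /\ {in H &, forall a b, vmul a b \in H}.

Lemma sumA (n : nat) (k : 'I_n -> bool) (H : {set V n}) a : subg H ->
  \sum_(h in H) sg (B k a h) = (if a \in perpS k H then #|H| else 0%N)%:Z.
Proof.
move=> [H1 HM]; case: ifP => Pa.
  rewrite (eq_bigr (fun _ => 1)) ?sumr_const ?natz // => h hH.
  by move: Pa; rewrite inE => /forallP /(_ h); rewrite hH /= => /negbTE ->.
move: Pa; rewrite inE => /negbT /forallPn [h0]; rewrite negb_imply negbK => /andP [h0H Bh0].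
apply: (sum_flip (t := h0)) => b.
  apply/idP/idP => [|bH]; last exact: HM.
  by move=> /(HM _ _ h0H); rewrite vmulK.
by rewrite B_mulr Bh0 sgD /= mulN1r.
Qed.

Lemma sumB (n : nat) (k : 'I_n -> bool) (h : V n) :
  \sum_(a : V n) sg (B k a h) = (if h == vone n then #|V n| else 0%N)%:Z.
Proof.
case: ifP => [/eqP -> | /negbT nh].
  by rewrite (eq_bigr (fun _ => 1)) ?sumr_const ?natz // => a _; rewrite B_one.
have [a0 Ba0] := nondeg k nh.
apply: (sum_flip (t := a0)) => // a.
by rewrite B_mull Ba0 sgD /= mulN1r.
Qed.

Lemma perp_subg (n : nat) (k : 'I_n -> bool) (H : {set V n}) : subg (perpS k H).
Proof.
split.
  by rewrite inE; apply/forallP => h; apply/implyP => _; rewrite B_sym B_one.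
move=> a b; rewrite !inE => /forallP Ha /forallP Hb; apply/forallP => h.
apply/implyP => hH; rewrite B_mull.
by move: (Ha h) (Hb h); rewrite hH /= => /negbTE -> /negbTE ->.
Qed.

Lemma card_perp (n : nat) (k : 'I_n -> bool) (H : {set V n}) : subg H ->
  (#|H| * #|perpS k H| = #|V n|)%N.
Proof.
move=> sH.
have E : \sum_(a : V n) \sum_(h in H) sg (B k a h) = (#|H| * #|perpS k H|)%N%:Z.
  rewrite (eq_bigr (fun a => if a \in perpS k H then (#|H|%:Z : int) else 0)); last first.
    by move=> a _; rewrite sumA //; case: ifP.
  by rewrite -big_mkcond /= sumr_const -natz -mulrnA natz.
have E2 : \sum_(a : V n) \sum_(h in H) sg (B k a h) = #|V n|%:Z.
  rewrite exchange_big /= (eq_bigr (fun h => (if h == vone n then #|V n| else 0%N)%:Z)); last first.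
    by move=> h _; rewrite sumB.
  rewrite (bigD1 (vone n)) ?sH.1 //= eqxx big1 ?addr0 // => h /andP [_ /negbTE ->].
  done.
by move: E; rewrite E2 => -[->].
Qed.

Lemma core (n : nat) (k : 'I_n -> bool) (H : {set V n}) (x : V n) : subg H ->
  (forall e, (forall h, h \in H -> B k e h = false) -> B k x e = false) -> x \in H.
Proof.
move=> sH Hx.
have sub : H \subset perpS k (perpS k H).
  apply/subsetP => h hH; rewrite inE; apply/forallP => e; apply/implyP.
  by rewrite inE => /forallP /(_ h); rewrite hH /= B_sym.
have c1 := card_perp k sH.
have c2 := card_perp k (perp_subg k H).
have pos : (0 < #|perpS k H|)%N.
  by apply/card_gt0P; exists (vone n); exact: (perp_subg k H).1.
have ceq : #|perpS k (perpS k H)| = #|H|.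
  by apply/eqP; rewrite -(eqn_pmul2l pos) c2 mulnC c1.
have : H == perpS k (perpS k H) by rewrite eqEcard sub ceq leqnn.
move/eqP => ->; rewrite inE; apply/forallP => e; apply/implyP => eP.
apply/negbT; apply: Hx => h hH.
by move: eP; rewrite inE => /forallP /(_ h); rewrite hH /= => /negbTE.
Qed.

Definition enc (b : bool) : loc b -> bb :=
  match b as b0 return loc b0 -> bb with
  | true => fun p => match p with PI => (false,false) | PX => (true,false)
                     | PY => (true,true) | PZ => (false,true) end
  | false => fun x => (x, false) end.

Definition dec (b : bool) : bb -> loc b :=
  match b as b0 return bb -> loc b0 with
  | true => fun q => match q with (false,false) => PI | (true,false) => PX
                     | (true,true) => PY | (false,true) => PZ end
  | false => fun q => q.1 end.

Lemma enc_char b (x y : loc b) : locchar x y = sg (beta b (enc x) (enc y)).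
Proof. by case: b x y => [[] []|[] []]. Qed.

Lemma enc_dec b q (y : loc b) : beta b q (enc y) = beta b (enc (dec b q)) (enc y).
Proof. by case: b y => [[]|[]]; case: q => [[] []]. Qed.

Lemma enc_mul b (x y : loc b) : enc (locmul x y) = xorp (enc x) (enc y).
Proof. by case: b x y => [[] []|[] []]. Qed.

Lemma enc_inj b (x y : loc b) : enc x = enc y -> x = y.
Proof. by case: b x y => [[] []|[] []]. Qed.

Lemma enc_one b : enc (locone b) = (false, false).
Proof. by case: b. Qed.

Lemma dec_zero b : dec b (false, false) = locone b.
Proof. by case: b. Qed.

Lemma locmul_self b (x : loc b) : locmul x x = locone b.
Proof. by case: b x => [[]|[]]. Qed.

Definition encode (n : nat) (k : 'I_n -> bool) (a : elt k) : V n := [ffun i => enc (a i)].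
Definition decode (n : nat) (k : 'I_n -> bool) (v : V n) : elt k := fun i => dec (k i) (v i).

Lemma bichar_enc (n : nat) (k : 'I_n -> bool) (a b : elt k) : bichar a b = sg (B k (encode a) (encode b)).
Proof.
rewrite /bichar /B (big_morph sg sgD (erefl _)); apply: eq_bigr => i _.
by rewrite !ffunE enc_char.
Qed.

Lemma B_dec (n : nat) (k : 'I_n -> bool) (e : V n) (m : elt k) : B k e (encode m) = B k (encode (decode k e)) (encode m).
Proof. by apply: eq_bigr => i _; rewrite !ffunE enc_dec. Qed.

Lemma encode_mul (n : nat) (k : 'I_n -> bool) (a b : elt k) : encode (amul a b) = vmul (encode a) (encode b).
Proof. by apply/ffunP => i; rewrite !ffunE enc_mul. Qed.

Definition restr n (R : {set 'I_n}) (x : V n) : V n :=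
  [ffun i => if i \in R then x i else (false, false)].

Lemma restrB (n : nat) (k : 'I_n -> bool) (R : {set 'I_n}) (x y : V n) : (forall i, i \notin R -> y i = (false, false)) ->
  B k (restr R x) y = B k x y.
Proof.
move=> Hy; apply: eq_bigr => i _; rewrite ffunE; case: ifP => // /negbT /Hy ->.
by rewrite !beta0.
Qed.

Lemma restr_out n (R : {set 'I_n}) (x : V n) i : i \notin R -> restr R x i = (false, false).
Proof. by rewrite ffunE => /negbTE ->. Qed.

Lemma sg1 b : sg b = 1 -> b = false.
Proof. by case: b. Qed.

Theorem lemma7 (n : nat) (k : 'I_n -> bool) (G M : elt k -> Prop)
    (R : {set 'I_n}) :
  is_subgroup G -> is_subgroup M ->
  (forall g, G g -> perp M g) ->
  correctable G M R ->
  forall l, perp G l ->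
  exists l' : elt k,
    perp G l' /\ (exists m, M m /\ l' = amul l m) /\
    (forall i, in_supp l' i -> i \notin R).
Proof.
move=> _ [M1 MM _] GM cor l lG.
pose H := [set v : V n | `[< exists m, M m /\ v = restr R (encode m) >]].
have sH : subg H.
  split.
    rewrite inE; apply/asboolP; exists (aone k); split => //.
    by apply/ffunP => i; rewrite !ffunE enc_one; case: ifP.
  move=> a b; rewrite !inE => /asboolP [m1 [Mm1 ->]] /asboolP [m2 [Mm2 ->]].
  apply/asboolP; exists (amul m1 m2); split; first exact: MM.
  apply/ffunP => i; rewrite !ffunE enc_mul; case: ifP => //.
have xH : restr R (encode l) \in H.
  apply: (core (k:=k)) sH _ => e He.
  set e' := restr R e.
  set dg := decode k e'.
  have e'out : forall i, i \notin R -> e' i = (false, false) by move=> i; exact: restr_out.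
  have dgM : perp M dg.
    move=> m Mm; rewrite bichar_enc -B_dec B_sym -(restrB k (encode m) e'out) B_sym.
    rewrite restrB; last by move=> i; exact: restr_out.
    by rewrite He //= inE; apply/asboolP; exists m.
  have dgG : G dg.
    apply: (cor _ dgM) => i; apply: contraPP => /negP iR.
    by rewrite /in_supp /dg /decode e'out // dec_zero.
  have := lG _ dgG; rewrite bichar_enc => /sg1 <-.
  rewrite B_sym -(restrB k e (restr_out (R:=R) (encode l))) -/e' B_sym (restrB k _ e'out).
  by rewrite B_sym B_dec B_sym.
move: xH; rewrite inE => /asboolP [m [Mm Eq]].
exists (amul l m); split; last split.
- move=> g Gg; rewrite bichar_enc encode_mul B_mull.
  have := lG _ Gg; rewrite bichar_enc => /sg1 ->.
  have := GM _ Gg _ Mm; rewrite bichar_enc B_sym => /sg1 -> //.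
- by exists m.
- move=> i; apply: contraPN => iR; rewrite /in_supp /amul.
  have := congr1 (fun f : V n => f i) Eq; rewrite !ffunE iR => /enc_inj ->.
  by rewrite locmul_self.
Qed.
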